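(* Let $m,n\ge 1$ and let $\Gamma$ be an acyclic $(m+n-1)$-graph such that the graph $\Delta_0(\Gamma)$ (defined in the context) is also acyclic. If $\Delta_1(\Gamma)$ has $s$ connected components and $\Delta_0(\Gamma)$ has $t$ connected components, then $\Gamma$ has exactly $s+t-1$ connected components.
   Context: For $N\ge1$, an $N$-graph is a graph with vertex set $\{1,\dots,N\}$ and a finite collection of oriented edges between distinct vertices (multiple edges allowed, no loops). It is acyclic if it contains no unoriented cycle (in particular, no two edges join the same pair of vertices). For an $(m+n-1)$-graph $\Gamma$, group its vertices as $\{1,\dots,m\},\{m+1\},\dots,\{m+n-1\}$. Then $\Delta_1(\Gamma)$ is the $m$-graph which is the subgraph of $\Gamma$ on vertices $1,\dots,m$ with all edges of $\Gamma$ among them, and $\Delta_0(\Gamma)$ is the $n$-graph obtained by clasping the vertices $1,\dots,m$ into a single vertex labeled $1$ (vertex $a\ge m+1$ becomes vertex $a-m+1$), keeping every edge of $\Gamma$ whose endpoints lie in different groups (as an edge between the images of its endpoints) and discarding the edges among $1,\dots,m$. *)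

(* Defs.v *)
From mathcomp Require Import all_boot.
Set Implicit Arguments. Unset Strict Implicit. Unset Printing Implicit Defensive.

(* An N-graph: vertex set 'I_N (vertex a of the paper, 1-based, is the
   ordinal a-1), and a finite list of oriented edges (source, target);
   multiple edges are allowed (the list may contain repetitions). *)
Definition ngraph (N : nat) := seq ('I_N * 'I_N).

Definition loopless N (G : ngraph N) : bool := all (fun e => e.1 != e.2) G.

Definition joins N (e : 'I_N * 'I_N) (x y : 'I_N) : bool :=
  (e == (x, y)) || (e == (y, x)).

Definition has_cycle N (G : ngraph N) : Prop :=
  exists (es : seq nat) (vs : seq 'I_N),
    [/\ 0 < size es, size vs = size es, uniq es && uniq vs,
        all (fun i => i < size G) es &
        forall (i : nat) (x0 : 'I_N), i < size es ->
          joins (nth (x0, x0) G (nth 0 es i))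
                (nth x0 vs i) (nth x0 vs ((i.+1) %% size es))].

Definition acyclic N (G : ngraph N) : Prop := ~ has_cycle G.

Definition adj N (G : ngraph N) : rel 'I_N :=
  fun x y => has (fun e => joins e x y) G.

Definition ncomp N (G : ngraph N) : nat := n_comp (connect (adj G)) predT.

Definition Delta1 (m n : nat) (G : ngraph (m + n - 1)) : ngraph m :=
  pmap (fun e : 'I_(m + n - 1) * 'I_(m + n - 1) =>
          match insub (val e.1) : option 'I_m, insub (val e.2) : option 'I_m with
          | Some a, Some b => Some (a, b)
          | _, _ => None
          end) G.

Definition clasp (m i : nat) : nat := if i < m then 0 else i - m + 1.

(* Delta_0: clasp vertices 0..m-1 into vertex 0, keep edges whose endpoints
   lie in different groups, i.e. not both in {0..m-1} *)
Definition Delta0 (m n : nat) (G : ngraph (m + n - 1)) : ngraph n :=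
  pmap (fun e : 'I_(m + n - 1) * 'I_(m + n - 1) =>
          if (val e.1 < m) && (val e.2 < m) then None else
          match insub (clasp m (val e.1)) : option 'I_n,
                insub (clasp m (val e.2)) : option 'I_n with
          | Some a, Some b => Some (a, b)
          | _, _ => None
          end) G.

(* Main.v *)
Require Import Defs.
From mathcomp Require Import all_boot zify.
Set Implicit Arguments. Unset Strict Implicit. Unset Printing Implicit Defensive.

Section Counting.
Variables (T : finType) (r : rel T) (symr : symmetric r) (a b : T).
Local Notation C := (connect r).
Definition radd : rel T := fun x y => r x y || (x == a) && (y == b) || (x == b) && (y == a).

Lemma symC : connect_sym r. Proof. exact: sym_connect_sym. Qed.

Lemma radd_sym : symmetric radd.
Proof. move=> x y; rewrite /radd symr; case: (x == a) (y == b) (x == b) (y == a) => [] [] [] []. all: by rewrite ?andbT ?andbF ?orbT ?orbF. Qed.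

Lemma conn_radd x y : connect radd x y = C x y || C x a && C b y || C x b && C a y.
Proof.
have sub : subrel (connect r) (connect radd).
  by apply: connect_sub => u v ruv; apply: connect1; rewrite /radd ruv.
have rab : connect radd a b by apply: connect1; rewrite /radd !eqxx /= orbT.
have rba : connect radd b a by apply: connect1; rewrite /radd !eqxx /= !orbT.
apply/idP/idP.
  case/connectP=> p pp ->; elim: p x pp => [|z p IH] x /=.
    by rewrite connect0.
  case/andP=> hxz /IH {IH}; rewrite /radd in hxz.
  case/orP: hxz => [/orP[hxz|/andP[/eqP-> /eqP->]]|/andP[/eqP-> /eqP->]].
  - have cxz : C x z by exact: connect1.
    case/orP=> [/orP[h|/andP[h1 h2]]|/andP[h1 h2]].
    + by rewrite (connect_trans cxz h).
    + by rewrite (connect_trans cxz h1) h2 orbT.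
    + by rewrite (connect_trans cxz h1) h2 !orbT.
  - case/orP=> [/orP[h|/andP[h1 h2]]|/andP[h1 h2]].
    + by rewrite connect0 h orbT.
    + by rewrite (connect_trans _ h2) // symC.
    + by rewrite h2.
  - case/orP=> [/orP[h|/andP[h1 h2]]|/andP[h1 h2]].
    + by rewrite connect0 h !orbT.
    + by rewrite h2.
    + by rewrite (connect_trans _ h2) // symC.
case/orP=> [/orP[h|/andP[h1 h2]]|/andP[h1 h2]].
- exact: sub.
- exact: connect_trans (sub _ _ h1) (connect_trans rab (sub _ _ h2)).
- exact: connect_trans (sub _ _ h1) (connect_trans rba (sub _ _ h2)).
Qed.

Lemma in_closure2 x : (x \in closure r (pred2 a b)) = C x a || C x b.
Proof.
rewrite /closure_mem unfold_in /=; apply/idP/idP.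
  case/pred0Pn=> z /andP[/= h1 /orP[] /eqP Ez]; rewrite -Ez; move: h1; rewrite inE => ->; by rewrite ?orbT.
case/orP=> h; apply/pred0Pn; [exists a| exists b]; rewrite /= inE h /=. all: by rewrite !inE eqxx ?orbT.
Qed.

Lemma count_add : ~~ C a b -> n_comp radd T + 1 = n_comp r T.
Proof.
move=> nab.
set A := closure r (pred2 a b).
rewrite (n_compC A r) (n_compC A radd) (n_comp_closure2 symC) nab.
have -> : n_comp radd A = 1.
  rewrite (@eq_n_comp_r _ _ A (connect radd a)); first exact: n_comp_connect (sym_connect_sym radd_sym) a.
  move=> y; rewrite in_closure2 inE conn_radd connect0 /= (negbTE nab) /= orbF.
  by rewrite !(symC y).
have -> : n_comp radd [predC A] = n_comp r [predC A].
  rewrite /n_comp_mem; apply: eq_card => x; rewrite !inE.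
  case xA: (x \in A) => /=; first by rewrite !andbF.
  rewrite !andbT /roots /root.
  suff -> : pick (connect radd x) = pick (connect r x) by [].
  apply: eq_pick => y /=; rewrite conn_radd.
  move: xA; rewrite in_closure2; case: (connect r x a); case: (connect r x b) => //= _.
  by rewrite !orbF.
by rewrite /= add1n addn1 addSn add1n.
Qed.
End Counting.

Lemma connect_connect (T : finType) (r : rel T) : connect (connect r) =2 connect r.
Proof.
move=> x y; apply/idP/idP; first exact: connect_sub.
by apply: connect_sub => u v h; apply: connect1; apply: connect1.
Qed.

Lemma connect_hom (T U : finType) (r : rel T) (r' : rel U) (h : T -> U) :
  (forall x y, r x y -> r' (h x) (h y)) ->
  forall x y, connect r x y -> connect r' (h x) (h y).
Proof.
move=> H x y /connectP [p pp ->]; elim: p x pp => [|z p IH] x /=; first by rewrite connect0.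
by case/andP => hxz hp; apply: connect_trans (connect1 (H _ _ hxz)) (IH _ hp).
Qed.

Lemma joins_sym N (g : 'I_N * 'I_N) x y : joins g x y = joins g y x.
Proof. by rewrite /joins orbC. Qed.

Lemma adj_sym N (G : ngraph N) : symmetric (adj G).
Proof. by move=> x y; rewrite /adj; apply: eq_has => g; rewrite joins_sym. Qed.

Lemma joins2 N (g : 'I_N * 'I_N) x y u v : joins g x y -> joins g u v -> x = u \/ x = v.
Proof.
case: g => c d; rewrite /joins !xpair_eqE.
by do 2! case/orP => /andP [/eqP ? /eqP ?]; subst; auto.
Qed.

Lemma adj_rcons N (G : ngraph N) e : adj (rcons G e) =2 radd (adj G) e.1 e.2.
Proof.
move=> x y; rewrite /adj has_rcons /radd; case: e => a b /=.
rewrite orbC -orbA; congr (_ || _); rewrite /joins !xpair_eqE.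
by rewrite ![_ == x]eq_sym ![_ == y]eq_sym [(y == a) && _]andbC.
Qed.

Lemma cyc_rcons N (G : ngraph N) e : has_cycle G -> has_cycle (rcons G e).
Proof.
case=> es [vs [h1 h2 h3 h4 h5]]; exists es, vs; split => //.
  by apply/allP => i /(allP h4); rewrite size_rcons => /ltnW.
move=> i x0 hi; rewrite nth_rcons.
have -> : nth 0 es i < size G by apply: (allP h4); apply: mem_nth.
exact: h5.
Qed.

Lemma cycle_of_connect N (G : ngraph N) e :
  connect (adj G) e.1 e.2 -> has_cycle (rcons G e).
Proof.
case: e => a b /= /connectP [p0 pp0 lastp0]; rewrite {}lastp0.
case: (shortenP pp0) => p pp up _.
set vs := a :: p; set k := size p.
have hadj : forall i, i < k -> adj G (nth a vs i) (nth a vs i.+1).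
  by move=> i hi; apply: (pathP a pp).
pose f i := find (fun e => joins e (nth a vs i) (nth a vs i.+1)) G.
have flt : forall i, i < k -> f i < size G.
  by move=> i /hadj; rewrite /adj has_find.
have fj : forall i x0, i < k -> joins (nth x0 G (f i)) (nth a vs i) (nth a vs i.+1).
  by move=> i x0 /hadj; rewrite /adj => hi; exact: (@nth_find _ x0 (fun e => joins e (nth a vs i) (nth a vs i.+1)) G hi).
have szvs : size vs = k.+1 by [].
exists (mkseq f k ++ [:: size G]), vs; split.
- by rewrite size_cat size_mkseq addn1.
- by rewrite size_cat size_mkseq addn1.
- rewrite up andbT cat_uniq /= andbT orbF; apply/andP; split.
    rewrite /mkseq map_inj_in_uniq ?iota_uniq // => i j; rewrite !mem_iota /= !add0n => hi hj eij.
    have j1 := fj i (a, a) hi; rewrite eij in j1.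
    have j2 := fj j (a, a) hj.
    have nu : forall u v, u < k.+1 -> v < k.+1 -> nth a vs u = nth a vs v -> u = v.
      move=> u v; rewrite -szvs => hu hv E; apply/eqP; rewrite -(nth_uniq a hu hv up); exact/eqP.
    have hi' : i < k.+1 by apply: ltnW.
    have hj' : j < k.+1 by apply: ltnW.
    have hi'' : i.+1 < k.+1 by [].
    have hj'' : j.+1 < k.+1 by [].
    case: (joins2 j1 j2) => E1.
      exact: nu hi' hj' E1.
    case: (joins2 j2 j1) => E2.
      exact: esym (nu _ _ hj' hi' E2).
    have e1 := nu _ _ hi' hj'' E1; have e2 := nu _ _ hj' hi'' E2.
    by exfalso; move: e1 e2 => -> /eqP; rewrite -[j.+2]addn2 -{1}[j]addn0 eqn_add2l.
  apply/negP => /mapP [i]; rewrite mem_iota add0n /= => hi E.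
  by have := flt i hi; rewrite -E ltnn.
- rewrite all_cat size_rcons /= ltnSn !andbT; apply/allP => x /mapP [i].
  by rewrite mem_iota add0n /= => /flt hi ->; apply: ltnW.
- move=> i x0; rewrite size_cat size_mkseq addn1 => hi.
  rewrite nth_cat size_mkseq (@set_nth_default _ vs a x0 i) ?szvs //.
  rewrite (@set_nth_default _ vs a x0 ((i.+1) %% k.+1)); last by rewrite szvs ltn_mod.
  have [ik| ->] : i < k \/ i = k by lia.
    rewrite ik nth_mkseq // nth_rcons flt // modn_small //; exact: fj.
  rewrite ltnn subnn /= nth_rcons ltnn eqxx modnn /=.
  by rewrite /joins (last_nth a) /= eqxx orbT.
Qed.

Lemma ncomp_add N (G : ngraph N) e :
  ~~ connect (adj G) e.1 e.2 -> ncomp (rcons G e) + 1 = ncomp G.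
Proof.
move=> nc; rewrite /ncomp !(eq_n_comp (connect_connect _)).
rewrite (eq_n_comp (eq_connect (adj_rcons G e))).
exact: count_add (@adj_sym N G) _ _ nc.
Qed.

Lemma ncomp_nil N : ncomp ([::] : ngraph N) = N.
Proof.
rewrite /ncomp (eq_n_comp (connect_connect _)) /n_comp_mem.
have E : forall x y : 'I_N, connect (adj [::]) x y -> x = y.
  by move=> x y /connectP [[|z p] //= _ ->].
rewrite -[RHS](card_ord N); apply: eq_card => x; rewrite !inE andbT /roots /=.
apply/eqP; apply: esym; apply: E; exact: connect_root.
Qed.

Lemma joinsV N (g : 'I_N * 'I_N) x y : joins g x y =
  ((val g.1 == val x) && (val g.2 == val y)) || ((val g.1 == val y) && (val g.2 == val x)).
Proof. by case: g => c d; rewrite /joins !xpair_eqE. Qed.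

Lemma insub_ord k (x : nat) (h : x < k) : insub x = Some (Ordinal h) :> option 'I_k.
Proof. case: insubP => [u _ vu|]; [by congr Some; apply: val_inj | by rewrite h]. Qed.

Lemma insub_ordF k (x : nat) : x < k = false -> insub x = None :> option 'I_k.
Proof. by move=> h; case: insubP => // u; rewrite h. Qed.

Lemma insub_val k (x : nat) (u : 'I_k) : insub x = Some u -> val u = x.
Proof. by case: insubP => [v _ <-|] // [->]. Qed.

Section Deltas.
Variables (m n : nat) (hm : 0 < m) (hn : 0 < n).
Local Notation N := (m + n - 1).

Lemma clasp_lt (x : 'I_N) : clasp m x < n.
Proof. have := hn; have := ltn_ord x; rewrite /clasp; case: ifP => H; lia. Qed.

Definition cl (x : 'I_N) : 'I_n := insubd (Ordinal hn) (clasp m x).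

Lemma insub_clasp (x : 'I_N) : insub (clasp m x) = Some (cl x).
Proof. by rewrite /cl /insubd (insub_ord (clasp_lt x)). Qed.

Lemma leq_mN : m <= N. Proof. have := hn; lia. Qed.
Definition w (x : 'I_m) : 'I_N := widen_ord leq_mN x.

Lemma D1_rcons_in (G : ngraph N) e (h1 : val e.1 < m) (h2 : val e.2 < m) :
  Delta1 (rcons G e) = rcons (Delta1 G) (Ordinal h1, Ordinal h2).
Proof.
by rewrite /Delta1 -!cats1 pmap_cat /= (insub_ord h1) (insub_ord h2).
Qed.

Lemma D1_rcons_out (G : ngraph N) e : ~~ ((val e.1 < m) && (val e.2 < m)) ->
  Delta1 (rcons G e) = Delta1 G.
Proof.
rewrite /Delta1 -!cats1 pmap_cat /= negb_and => /orP [] h.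
  by rewrite (insub_ordF (negbTE h)) cats0.
by rewrite (insub_ordF (negbTE h)); case: insub => *; rewrite cats0.
Qed.

Lemma D0_rcons_in (G : ngraph N) e : (val e.1 < m) && (val e.2 < m) ->
  Delta0 (rcons G e) = Delta0 G.
Proof. by move=> h; rewrite /Delta0 -!cats1 pmap_cat /= h cats0. Qed.

Lemma D0_rcons_out (G : ngraph N) e : ~~ ((val e.1 < m) && (val e.2 < m)) ->
  Delta0 (rcons G e) = rcons (Delta0 G) (cl e.1, cl e.2).
Proof.
by move=> h; rewrite /Delta0 -!cats1 pmap_cat /= (negbTE h) !insub_clasp.
Qed.

Lemma adj_D1 (G : ngraph N) x y : adj (Delta1 G) x y -> adj G (w x) (w y).
Proof.
case/hasP => e' /[!mem_pmap] /mapP [e eG E] j; apply/hasP; exists e => //.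
move: E; case E1: (insub (val e.1) : option 'I_m) => [a|//];
case E2: (insub (val e.2) : option 'I_m) => [b|//] [E]; subst e'.
have va := insub_val E1; have vb := insub_val E2.
by move: j; rewrite !joinsV /= -va -vb.
Qed.

Lemma invariant (G : ngraph N) : acyclic G -> acyclic (Delta0 G) ->
  ncomp G + 1 = ncomp (Delta1 G) + ncomp (Delta0 G).
Proof.
elim/last_ind: G => [|G e IH] aG a0.
  rewrite /Delta1 /Delta0 /= !ncomp_nil; lia.
have aG' : acyclic G by move=> c; apply: aG; exact: cyc_rcons c.
have nc : ~~ connect (adj G) e.1 e.2.
  by apply/negP => c; apply: aG; exact: cycle_of_connect c.
have hG := ncomp_add nc.
case: (boolP ((val e.1 < m) && (val e.2 < m))) => h.
  move: (h) => /andP [h1 h2].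
  rewrite (D0_rcons_in _ h) in a0 *.
  have nc1 : ~~ connect (adj (Delta1 G)) (Ordinal h1) (Ordinal h2).
    apply/negP => c; move: nc => /negP; apply.
    have := connect_hom (@adj_D1 G) c.
    have -> : w (Ordinal h1) = e.1 by apply: val_inj.
    by have -> : w (Ordinal h2) = e.2 by apply: val_inj.
  have h1' : ncomp (Delta1 (rcons G e)) + 1 = ncomp (Delta1 G).
    rewrite (D1_rcons_in _ h1 h2); exact: (@ncomp_add _ _ (Ordinal h1, Ordinal h2) nc1).
  have := IH aG' a0; lia.
rewrite (D1_rcons_out _ h).
have a0' : acyclic (Delta0 G).
  by move=> c; apply: a0; rewrite (D0_rcons_out _ h); exact: cyc_rcons c.
have nc0 : ~~ connect (adj (Delta0 G)) (cl e.1) (cl e.2).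
  apply/negP => c; apply: a0; rewrite (D0_rcons_out _ h).
  exact: (@cycle_of_connect _ _ (cl e.1, cl e.2) c).
have h0 : ncomp (Delta0 (rcons G e)) + 1 = ncomp (Delta0 G).
  rewrite (D0_rcons_out _ h); exact: (@ncomp_add _ _ (cl e.1, cl e.2) nc0).
have := IH aG' a0'; lia.
Qed.
End Deltas.

Theorem lemma3p7 (m n : nat) (hm : 0 < m) (hn : 0 < n)
  (G : ngraph (m + n - 1)) (s t : nat) :
  loopless G -> acyclic G -> acyclic (Delta0 G) ->
  ncomp (Delta1 G) = s -> ncomp (Delta0 G) = t ->
  ncomp G = s + t - 1.
Proof.
move=> _ aG a0 <- <-; have := invariant hm hn aG a0; lia.
Qed.
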